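(* Let $F\in C^3(\mathbb{R}^n\setminus\{0\})$ be a strongly convex norm on $\mathbb{R}^n$, and let $u$ be a $C^2$ function on an open set $U\subset\mathbb{R}^n$. With the summation convention, $F=F(\nabla u)$, $F_i=F_{\xi_i}(\nabla u)$, $a_{ij}=\frac{\partial^2}{\partial\xi_i\partial\xi_j}(\tfrac12F^2)(\nabla u)=F_iF_j+FF_{\xi_i\xi_j}(\nabla u)$, and $u_{ij}=\partial^2u/\partial x_i\partial x_j$, at every point where $\nabla u\neq0$ one has $$a_{ij}a_{kl}u_{ik}u_{jl}\ge a_{ij}F_kF_lu_{ik}u_{jl}.$$
   Context: A norm on $\mathbb{R}^n$ is a convex, even, positively $1$-homogeneous function $F:\mathbb{R}^n\to[0,\infty)$, $C^1$ away from $0$, positive away from $0$. It is strongly convex if $\mathrm{Hess}(F^2)$ is positive definite on $\mathbb{R}^n\setminus\{0\}$. *)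

(* Defs.v *)
From HB Require Import structures.
From mathcomp Require Import all_boot all_order all_algebra.
From mathcomp Require Import all_classical all_reals all_analysis.
Set Implicit Arguments. Unset Strict Implicit. Unset Printing Implicit Defensive.
Import Order.TTheory GRing.Theory Num.Theory.
Import numFieldNormedType.Exports.
Local Open Scope classical_set_scope.
Local Open Scope ring_scope.

Definition ebasis (R : realType) (n : nat) (i : 'I_n) : 'rV[R]_n := delta_mx 0 i.

Definition pd (R : realType) (n : nat) (i : 'I_n) (f : 'rV[R]_n -> R)
  : 'rV[R]_n -> R := fun x => 'D_(ebasis R i) f x.

(* C^k on a set U (intended to be open): all partials of order <= k exist,
   (k-1)-st order partials are (Frechet) differentiable, k-th order are continuous. *)
Fixpoint Ck (R : realType) (n : nat) (k : nat) (U : set 'rV[R]_n)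
    (f : 'rV[R]_n -> R) : Prop :=
  match k with
  | 0 => forall x, U x -> {for x, continuous f}
  | k'.+1 => (forall x, U x -> differentiable f x) /\
             (forall i : 'I_n, Ck k' U (pd i f))
  end.

Definition grad (R : realType) (n : nat) (f : 'rV[R]_n -> R) (x : 'rV[R]_n)
  : 'rV[R]_n := \row_i pd i f x.
Definition hess (R : realType) (n : nat) (f : 'rV[R]_n -> R) (x : 'rV[R]_n)
  : 'M[R]_n := \matrix_(i, j) pd i (pd j f) x.

Definition is_norm (R : realType) (n : nat) (F : 'rV[R]_n -> R) : Prop :=
  (forall x, 0 <= F x) /\
  (forall (x y : 'rV[R]_n) (t : R), 0 <= t <= 1 ->
      F ((1 - t) *: x + t *: y) <= (1 - t) * F x + t * F y) /\
  (forall x, F (- x) = F x) /\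
  (forall (t : R) x, 0 < t -> F (t *: x) = t * F x) /\
  Ck 1 (~` [set 0]) F /\
  (forall x, x != 0 -> 0 < F x).

Definition strongly_convex (R : realType) (n : nat) (F : 'rV[R]_n -> R) : Prop :=
  forall xi : 'rV[R]_n, xi != 0 ->
    forall v : 'rV[R]_n, v != 0 ->
      0 < (v *m hess (fun z => F z ^+ 2) xi *m v^T) 0 0.

(* Main.v *)
Require Import Defs.
From HB Require Import structures.
From mathcomp Require Import all_boot all_order all_algebra.
From mathcomp Require Import all_classical all_reals all_analysis.
From mathcomp Require Import ring lra.
Import Order.TTheory GRing.Theory Num.Theory.
Import numFieldNormedType.Exports.
Local Open Scope classical_set_scope.
Local Open Scope ring_scope.

Local Close Scope classical_set_scope.
Section Alg.
Variable R : realFieldType.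
Variable n : nat.
Implicit Types (A Z : 'I_n -> 'I_n -> R) (v w : 'I_n -> R).

Definition qf A v := \sum_i \sum_j v i * A i j * v j.
Definition bf A v w := \sum_i \sum_j v i * A i j * w j.
Definition symm A := forall i j, A i j = A j i.
Definition psd A := forall v, 0 <= qf A v.
Definition ev (i : 'I_n) : 'I_n -> R := fun a => (a == i)%:R.

Lemma sum_ev (F : 'I_n -> R) i : \sum_b F b * ev i b = F i.
Proof.
rewrite (bigD1 i) //= /ev eqxx mulr1 big1 ?addr0 // => b /negPf ->.
by rewrite mulr0.
Qed.

Lemma sum_evl (F : 'I_n -> R) i : \sum_b ev i b * F b = F i.
Proof. by rewrite -[RHS](sum_ev F i); apply: eq_bigr => b _; rewrite mulrC. Qed.

Lemma bf_sym A v w : symm A -> bf A v w = bf A w v.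
Proof.
move=> sA; rewrite /bf exchange_big; apply: eq_bigr => i _.
by apply: eq_bigr => j _; rewrite sA; ring.
Qed.

Lemma qf_add A v w t : symm A ->
  qf A (fun a => v a + t * w a) = qf A v + 2 * t * bf A v w + t ^+ 2 * qf A w.
Proof.
move=> sA.
have -> : qf A (fun a => v a + t * w a) =
  \sum_i \sum_j (v i * A i j * v j + t * (v i * A i j * w j + w i * A i j * v j)
     + t ^+ 2 * (w i * A i j * w j)).
  by apply: eq_bigr => i _; apply: eq_bigr => j _; ring.
under eq_bigr => i _ do rewrite big_split /= big_split /= -!big_distrr /=.
rewrite big_split /= big_split /= -!big_distrr /=.
rewrite /qf /bf; congr (_ + _ + _).
under eq_bigr => i _ do rewrite big_split /=.
rewrite big_split /=.
have := @bf_sym A w v sA; rewrite /bf => ->; ring.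
Qed.

Lemma qf_ev A i : qf A (ev i) = A i i.
Proof.
rewrite /qf; under eq_bigr => a _ do rewrite sum_ev.
by rewrite sum_evl.
Qed.

Lemma bf_ev A v i : bf A v (ev i) = \sum_a v a * A a i.
Proof. by rewrite /bf; apply: eq_bigr => a _; rewrite sum_ev. Qed.

Lemma psd_diag A i : psd A -> 0 <= A i i.
Proof. by move=> pA; rewrite -qf_ev. Qed.

Lemma psd_diag0 A i j : symm A -> psd A -> A i i = 0 -> A j i = 0.
Proof.
move=> sA pA Aii.
have key t : 0 <= A j j + 2 * t * A j i.
  have := pA (fun a => ev j a + t * ev i a); rewrite qf_add // !qf_ev Aii.
  by rewrite /bf; under eq_bigr => a _ do rewrite sum_ev; rewrite sum_evl; lra.
apply/eqP; apply/negPn/negP => nz.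
have := key (- (A j j + 1) / (2 * A j i)).
have -> : 2 * (- (A j j + 1) / (2 * A j i)) * A j i = - (A j j + 1).
  by field.
lra.
Qed.


Lemma tr_zero A Z : (forall i, A i i = 0) -> symm A -> psd A ->
  \sum_k \sum_l A k l * Z k l = 0.
Proof.
move=> h0 sA pA; apply: big1 => k _; apply: big1 => l _.
by rewrite (@psd_diag0 A l k sA pA (h0 l)) mul0r.
Qed.

Lemma tr_psd_rec m : forall A, (#|[set i | A i i != 0%R]| <= m)%N -> symm A -> psd A ->
  forall Z, psd Z -> 0 <= \sum_k \sum_l A k l * Z k l.
Proof.
elim: m => [|m IH] A hc sA pA Z pZ.
  rewrite tr_zero // => i; move: hc; rewrite leqn0 => /eqP/cards0_eq E.
  have : i \in [set i | A i i != 0] = false by rewrite E inE.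
  by rewrite inE => /negbFE/eqP.
case: (pickP [pred i | A i i != 0]) => [i /= Hi | none]; last first.
  by rewrite tr_zero // => k; have /= /negbFE/eqP := none k.
have dpos : 0 < A i i by rewrite lt_def Hi (@psd_diag A i pA).
set d := A i i in dpos.
pose A' := fun k l => A k l - A k i * A i l / d.
have sA' : symm A' by move=> k l; rewrite /A' sA [A k i]sA [A i l]sA; ring.
have pA' : psd A'.
  move=> v; set b := \sum_a v a * A a i.
  have E : qf A' v = qf A v - b ^+ 2 / d.
    have E2 : b ^+ 2 / d = \sum_k \sum_l v k * (A k i * A i l / d) * v l.
      rewrite /b expr2 -mulrA big_distrl /=; apply: eq_bigr => k _.
      rewrite mulr_suml big_distrr /=; apply: eq_bigr => l _.
      rewrite [A i l]sA; field; exact: lt0r_neq0.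
    rewrite E2 /qf -sumrB; apply: eq_bigr => k _.
    rewrite -sumrB; apply: eq_bigr => l _.
    rewrite /A'; ring.
  have := pA (fun a => v a + (- b / d) * ev i a).
  rewrite qf_add // qf_ev bf_ev -/b -/d E => h.
  have -> : qf A v - b ^+ 2 / d = qf A v + 2 * (- b / d) * b + (- b / d) ^+ 2 * d.
    by field; exact: lt0r_neq0.
  exact: h.
have hc' : (#|[set k | A' k k != 0%R]| <= m)%N.
  have sub : [set k | A' k k != 0] \subset [set k | A k k != 0] :\ i.
    apply/fintype.subsetP => k; rewrite !inE /A' => nz.
    apply/andP; split.
      apply: contraNneq nz => ->; rewrite -/d; apply/eqP; field; exact: lt0r_neq0.
    apply: contraNneq nz => Akk; rewrite Akk [A k i]sA (@psd_diag0 A k i sA pA Akk).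
    by rewrite mul0r mul0r subrr.
  apply: leq_trans (subset_leq_card sub) _.
  move: hc; rewrite (cardsD1 i) inE Hi /=; by rewrite add1n ltnS.
have := IH A' hc' sA' pA' Z pZ.
have -> : \sum_k \sum_l A k l * Z k l =
   \sum_k \sum_l A' k l * Z k l + qf Z (fun k => A k i) / d.
  rewrite /qf big_distrl /= -big_split /=; apply: eq_bigr => k _.
  rewrite big_distrl /= -big_split /=; apply: eq_bigr => l _.
  rewrite /A' [A l i]sA; field; exact: lt0r_neq0.
move=> h; apply: addr_ge0 => //; apply: divr_ge0 => //; exact: ltW.
Qed.

Lemma tr_psd A Z : symm A -> psd A -> psd Z -> 0 <= \sum_k \sum_l A k l * Z k l.
Proof. by move=> sA pA pZ; apply: (@tr_psd_rec #|[set i | A i i != 0]|). Qed.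


Lemma swap4 (F : 'I_n -> 'I_n -> 'I_n -> 'I_n -> R) :
  \sum_k \sum_l \sum_i \sum_j F k l i j = \sum_i \sum_j \sum_k \sum_l F k l i j.
Proof.
under eq_bigr => k _ do rewrite exchange_big /=.
under eq_bigr => k _ do under eq_bigr => i _ do rewrite exchange_big /=.
rewrite exchange_big /=.
by under eq_bigr => i _ do rewrite exchange_big /=.
Qed.

Lemma prod_sums (f g : 'I_n -> R) :
  (\sum_k f k) * (\sum_l g l) = \sum_k \sum_l f k * g l.
Proof. by rewrite mulr_suml; apply: eq_bigr => k _; rewrite mulr_sumr. Qed.

Lemma Q_ge0 A X : symm A -> psd A ->
  0 <= \sum_i \sum_j \sum_k \sum_l A i j * A k l * X i k * X j l.
Proof.
move=> sA pA.
pose Z := fun k l => \sum_i \sum_j X i k * A i j * X j l.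
have pZ : psd Z.
  move=> v; have := pA (fun i => \sum_k X i k * v k).
  have -> : qf A (fun i => \sum_k X i k * v k) = qf Z v; last by [].
  rewrite /qf /Z.
  transitivity (\sum_i \sum_j \sum_k \sum_l X i k * v k * A i j * (X j l * v l)).
    apply: eq_bigr => i _; apply: eq_bigr => j _.
    rewrite !mulr_suml; apply: eq_bigr => k _.
    by rewrite mulr_sumr.
  rewrite -swap4; apply: eq_bigr => k _; apply: eq_bigr => l _.
  rewrite mulr_sumr mulr_suml; apply: eq_bigr => i _.
  rewrite mulr_sumr mulr_suml; apply: eq_bigr => j _.
  ring.
have := @tr_psd A Z sA pA pZ.
have -> : \sum_k \sum_l A k l * Z k l =
   \sum_i \sum_j \sum_k \sum_l A i j * A k l * X i k * X j l; last by [].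
rewrite /Z -swap4; apply: eq_bigr => k _; apply: eq_bigr => l _.
rewrite mulr_sumr; apply: eq_bigr => i _.
rewrite mulr_sumr; apply: eq_bigr => j _.
rewrite [A i j]sA; ring.
Qed.

Lemma alg_main A (p q : 'I_n -> R) (U : 'I_n -> 'I_n -> R) :
  symm A -> psd A -> (forall j, \sum_i q i * A i j = p j) -> \sum_i p i * q i = 1 ->
  \sum_i \sum_j \sum_k \sum_l A i j * p k * p l * U i k * U j l <=
  \sum_i \sum_j \sum_k \sum_l A i j * A k l * U i k * U j l.
Proof.
move=> sA pA col pq.
have row k : \sum_l A k l * q l = p k.
  by rewrite -col; apply: eq_bigr => l _; rewrite sA mulrC.
pose s := fun i => \sum_m U i m * p m.
have hS : \sum_i \sum_j \sum_k \sum_l A i j * p k * p l * U i k * U j l =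
          \sum_i \sum_j A i j * s i * s j.
  apply: eq_bigr => i _; apply: eq_bigr => j _.
  rewrite -mulrA prod_sums mulr_sumr; apply: eq_bigr => k _.
  rewrite mulr_sumr; apply: eq_bigr => l _; ring.
pose X := fun i k => U i k - s i * q k.
have := @Q_ge0 A X sA pA.
have -> : \sum_i \sum_j \sum_k \sum_l A i j * A k l * X i k * X j l =
   \sum_i \sum_j \sum_k \sum_l A i j * A k l * U i k * U j l -
   \sum_i \sum_j A i j * s i * s j.
  rewrite -sumrB; apply: eq_bigr => i _; rewrite -sumrB; apply: eq_bigr => j _.
  have T2 : \sum_k \sum_l A i j * A k l * U i k * (s j * q l) = A i j * s i * s j.
    transitivity (A i j * s j * \sum_k U i k * \sum_l A k l * q l).
      rewrite mulr_sumr; apply: eq_bigr => k _.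
      rewrite mulr_sumr mulr_sumr; apply: eq_bigr => l _; ring.
    under eq_bigr => k _ do rewrite row.
    rewrite /s; ring.
  have T3 : \sum_k \sum_l A i j * A k l * (s i * q k) * U j l = A i j * s i * s j.
    transitivity (A i j * s i * \sum_l U j l * \sum_k q k * A k l).
      rewrite exchange_big mulr_sumr; apply: eq_bigr => l _.
      rewrite mulr_sumr mulr_sumr; apply: eq_bigr => k _; ring.
    under eq_bigr => l _ do rewrite col.
    rewrite /s; ring.
  have T4 : \sum_k \sum_l A i j * A k l * (s i * q k) * (s j * q l) = A i j * s i * s j.
    transitivity (A i j * s i * s j * \sum_k q k * \sum_l A k l * q l).
      rewrite mulr_sumr; apply: eq_bigr => k _.
      rewrite mulr_sumr mulr_sumr; apply: eq_bigr => l _; ring.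
    under eq_bigr => k _ do rewrite row.
    have -> : \sum_k q k * p k = 1 by rewrite -pq; apply: eq_bigr => k _; rewrite mulrC.
    by rewrite mulr1.
  transitivity (\sum_k \sum_l A i j * A k l * U i k * U j l
     - \sum_k \sum_l A i j * A k l * U i k * (s j * q l)
     - \sum_k \sum_l A i j * A k l * (s i * q k) * U j l
     + \sum_k \sum_l A i j * A k l * (s i * q k) * (s j * q l)).
    rewrite -!sumrB -big_split /=; apply: eq_bigr => k _.
    rewrite -!sumrB -big_split /=; apply: eq_bigr => l _.
    rewrite /X; ring.
  rewrite T2 T3 T4; ring.
rewrite hS subr_ge0 //.
Qed.

End Alg.
Arguments symm {R n}. Arguments psd {R n}. Arguments qf {R n}. Arguments alg_main {R n}.
Local Open Scope classical_set_scope.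
Local Open Scope ring_scope.

Section Ana.
Variable R : realType.
Variable n : nat.
Implicit Types (f g : 'rV[R]_n -> R).

Lemma line_is_derive f (z v : 'rV[R]_n) (s : R) :
  derivable f (z + s *: v) v ->
  is_derive s 1 (fun t => f (z + t *: v)) ('D_v f (z + s *: v)).
Proof.
move=> df.
have E : (fun h : R => h^-1 *: (((fun t => f (z + t *: v)) \o shift s) (h *: 1)
             - f (z + s *: v))) =
         (fun h : R => h^-1 *: ((f \o shift (z + s *: v)) (h *: v) - f (z + s *: v))).
  apply/funext => h /=; congr (_ *: (f _ - _)).
  by rewrite scalerDl [_%:A]mulr1 addrCA.
split; first by rewrite /derivable E.
by rewrite /derive E.
Qed.


Local Notation e := (@ebasis R n).

Definition Dl f i j x h :=
  f ((x + h *: e j) + h *: e i) - f (x + h *: e i) - f (x + h *: e j) + f x.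

Lemma key_est f x i j (d : R) : 0 < d ->
  (forall y, `|y| < d -> differentiable f (x + y)) ->
  differentiable (pd i f) x ->
  forall eps, 0 < eps -> exists2 eta, 0 < eta & forall h, 0 < h < eta ->
    `|Dl f i j x h - h ^+ 2 * pd j (pd i f) x| <= eps * h ^+ 2.
Proof.
move=> d0 Hd Hg eps e0.
set g := pd i f.
set K := `|e i| + `|e j| + 1.
have K0 : 0 < K by rewrite /K; have := normr_ge0 (e i); have := normr_ge0 (e j); lra.
set eps' := eps / (2 * K).
have ep0 : 0 < eps' by rewrite /eps' divr_gt0 // mulr_gt0.
have := diff_locally Hg; move/eqaddoP => /(_ eps' ep0).
move/nbhs_norm0P => [d1 /= d10 Hd1].
have Hr : forall y, `|y| < d1 -> `|g (y + x) - (g x + 'd g x y)| <= eps' * `|y|.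
  by move=> y hy; exact: (Hd1 y hy).
have m0 : 0 < Num.min d d1 by rewrite lt_min d0 d10.
exists (Num.min d d1 / K); first by rewrite divr_gt0.
move=> h /andP[h0 hlt].
have hK : h * K < Num.min d d1 by rewrite -ltr_pdivlMr.
have hKd : h * K < d by move: hK; rewrite lt_min => /andP[].
have hKd1 : h * K < d1 by move: hK; rewrite lt_min => /andP[].
have nrm1 c : 0 <= c <= h -> `|c *: e i + h *: e j| <= h * K.
  move=> /andP[c0 ch]; apply: le_trans (ler_normD _ _) _.
  rewrite !normrZ (ger0_norm c0) (ger0_norm (ltW h0)).
  have := normr_ge0 (e i); have := normr_ge0 (e j); rewrite /K; nra.
have nrm2 c : 0 <= c <= h -> `|c *: e i| <= h * K.
  move=> /andP[c0 ch]; rewrite !normrZ (ger0_norm c0).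
  have := normr_ge0 (e i); have := normr_ge0 (e j); rewrite /K; nra.
have dif1 t : 0 <= t <= h -> differentiable f ((x + h *: e j) + t *: e i).
  by move=> ht; rewrite -addrA [h *: _ + _]addrC; apply: Hd; apply: le_lt_trans (nrm1 _ ht) hKd.
have dif2 t : 0 <= t <= h -> differentiable f (x + t *: e i).
  by move=> ht; apply: Hd; apply: le_lt_trans (nrm2 _ ht) hKd.
pose phi := fun t => f ((x + h *: e j) + t *: e i) - f (x + t *: e i).
pose dphi := fun t => g ((x + h *: e j) + t *: e i) - g (x + t *: e i).
have hder t : 0 <= t <= h -> is_derive t 1 phi (dphi t).
  move=> ht.
  have H1 := @line_is_derive f (x + h *: e j) (e i) t (diff_derivable (dif1 t ht)).
  have H2 := @line_is_derive f x (e i) t (diff_derivable (dif2 t ht)).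
  exact: is_deriveB.
have [c cin Hc] : exists2 c, c \in `]0, h[ & phi h - phi 0 = dphi c * (h - 0).
  apply: MVT => //.
    by move=> t; rewrite in_itv /= => /andP[t0 th]; apply: hder; rewrite !ltW.
  apply: derivable_within_continuous => t; rewrite in_itv /= => ht.
  by have [] := hder t ht.
move: cin; rewrite in_itv /= => /andP[c0 ch].
have hc : 0 <= c <= h by rewrite !ltW.
set y1 := c *: e i + h *: e j.
set y2 := c *: e i.
have n1 : `|y1| <= h * K := nrm1 c hc.
have n2 : `|y2| <= h * K := nrm2 c hc.
have r1 := Hr y1 (le_lt_trans n1 hKd1).
have r2 := Hr y2 (le_lt_trans n2 hKd1).
set L := pd j g x.
have LE : 'd g x y1 - 'd g x y2 = h * L.
  by rewrite -linearB /y1 /y2 addrAC subrr add0r linearZ /= /L /pd deriveE.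
have E1 : dphi c = g (y1 + x) - g (y2 + x).
  rewrite /dphi /y1 /y2; congr (g _ - g _); last by rewrite addrC.
  by rewrite addrC [x + _]addrC addrA.
have DE : Dl f i j x h = phi h - phi 0.
  rewrite /Dl /phi !scale0r !addr0; lra.
rewrite DE Hc subr0 E1.
set a1 := g (y1 + x) - (g x + 'd g x y1) in r1.
set a2 := g (y2 + x) - (g x + 'd g x y2) in r2.
have -> : (g (y1 + x) - g (y2 + x)) * h - h ^+ 2 * L = h * (a1 - a2).
  rewrite /a1 /a2 expr2 -mulrA -LE; ring.
rewrite normrM (gtr0_norm h0).
have na : `|a1 - a2| <= 2 * eps' * (h * K).
  apply: le_trans (ler_normB _ _) _.
  have := normr_ge0 y1; have := normr_ge0 y2; nra.
have -> : eps * h ^+ 2 = h * (2 * eps' * (h * K)).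
  rewrite /eps'; field; rewrite gt_eqF //.
by rewrite ler_wpM2l // ltW.
Qed.


Lemma clairaut f x i j (d : R) : 0 < d ->
  (forall y, `|y| < d -> differentiable f (x + y)) ->
  differentiable (pd i f) x -> differentiable (pd j f) x ->
  pd j (pd i f) x = pd i (pd j f) x.
Proof.
move=> d0 Hd Hi Hj.
have sym h : Dl f i j x h = Dl f j i x h.
  rewrite /Dl [x + h *: e i + h *: e j]addrAC; lra.
have half (A B : R) (eps : R) : 0 < eps ->
    (exists2 eta, 0 < eta & forall h, 0 < h < eta ->
      `|Dl f i j x h - h ^+ 2 * A| <= eps / 2 * h ^+ 2) ->
    (exists2 eta, 0 < eta & forall h, 0 < h < eta ->
      `|Dl f i j x h - h ^+ 2 * B| <= eps / 2 * h ^+ 2) ->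
    A <= B + eps.
  move=> e0 [e1 e10 H1] [e2 e20 H2].
  set h := Num.min e1 e2 / 2.
  have m0 : 0 < Num.min e1 e2 by rewrite lt_min e10 e20.
  have h0 : 0 < h by rewrite divr_gt0.
  have hm : h < Num.min e1 e2 by rewrite /h; lra.
  have := H1 h; have := H2 h.
  move: hm; rewrite lt_min => /andP[hm1 hm2].
  rewrite h0 hm1 hm2 /= => /(_ isT); rewrite ler_norml => /andP[a1 a2].
  move=> /(_ isT); rewrite ler_norml => /andP[b1 b2].
  have hh : 0 < h ^+ 2 by rewrite exprn_gt0.
  have : h ^+ 2 * A <= h ^+ 2 * (B + eps).
    rewrite mulrDr [h ^+ 2 * eps]mulrC.
    have -> : eps * h ^+ 2 = eps / 2 * h ^+ 2 + eps / 2 * h ^+ 2 by field.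
    lra.
  by rewrite ler_pM2l.
apply/eqP; rewrite eq_le; apply/andP; split; apply/ler_addgt0Pr => eps e0;
  have e2 : 0 < eps / 2 by rewrite divr_gt0.
  apply: half => //; first exact: (@key_est f x i j d d0 Hd Hi _ e2).
  have [eta eta0 H] := @key_est f x j i d d0 Hd Hj _ e2.
  by exists eta => // h hh; rewrite sym; exact: H.
apply: half => //; last exact: (@key_est f x i j d d0 Hd Hi _ e2).
have [eta eta0 H] := @key_est f x j i d d0 Hd Hj _ e2.
by exists eta => // h hh; rewrite sym; exact: H.
Qed.


Lemma derive_comp_scale f (t : R) x v :
  'D_v (fun y => f (t *: y)) x = 'D_(t *: v) f (t *: x).
Proof.
rewrite /derive.
have -> : (fun h : R => h^-1 *: (((fun y => f (t *: y)) \o shift x) (h *: v) - f (t *: x)))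
  = (fun h : R => h^-1 *: ((f \o shift (t *: x)) (h *: (t *: v)) - f (t *: x))).
  apply/funext => h /=.
  congr (_ *: (f _ - _)); by rewrite scalerDr !scalerA mulrC.
by [].
Qed.

Lemma pd_homog0 f x v (t : R) :
  (forall s y, 0 < s -> f (s *: y) = s * f y) -> 0 < t ->
  differentiable f (t *: x) -> derivable f x v ->
  'D_v f (t *: x) = 'D_v f x.
Proof.
move=> hom t0 df dv.
have E1 : 'D_v (fun y => f (t *: y)) x = t * 'D_v f (t *: x).
  by rewrite derive_comp_scale !deriveE // linearZ.
have E2 : 'D_v (fun y => f (t *: y)) x = t * 'D_v f x.
  have -> : (fun y => f (t *: y)) = t \*o f by apply/funext => y; rewrite hom.
  by rewrite deriveMl.
by apply: (mulfI (lt0r_neq0 t0)); rewrite -E1 -E2.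
Qed.

Lemma euler g x : (forall t, 0 < t -> g (t *: x) = t * g x) ->
  differentiable g x -> \sum_i x 0 i * pd i g x = g x.
Proof.
move=> hom dg.
transitivity ('D_x g x).
  rewrite deriveE //.
  have -> : 'd g x x = 'd g x (\sum_j x 0 j *: delta_mx 0 j) by rewrite -row_sum_delta.
  rewrite linear_sum /=; apply: eq_bigr => i _.
  by rewrite linearZ /= /pd deriveE.
rewrite /derive; apply: lim_near_cst => //=.
near=> h.
have hn0 : h != 0 by near: h; exact: nbhs_dnbhs_neq.
have h1 : 0 < h + 1.
  have : `|h| < 1 by near: h; exact: dnbhs0_lt.
  by rewrite ltr_norml; lra.
have -> : h *: x + x = (h + 1) *: x by rewrite scalerDl scale1r.
rewrite hom //; rewrite /GRing.scale /=; field.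
Unshelve. all: by end_near.
Qed.

End Ana.


Lemma near_nz (R : realType) (n : nat) (x : 'rV[R]_n) : x != 0 ->
  \forall y \near x, y != 0.
Proof.
move=> xn0; apply/nbhs_normP; exists `|x|; first by rewrite /= normr_gt0.
move=> y /= hy; apply/eqP => y0; move: hy; rewrite y0 subr0 ltxx.
by [].
Qed.

Lemma near_eq_nz (R : realType) (n : nat) (f g : 'rV[R]_n -> R) (x : 'rV[R]_n) :
  x != 0 -> (forall y, y != 0 -> f y = g y) -> \forall y \near x, f y = g y.
Proof.
move=> xn0 H; near=> y; apply: H; near: y; exact: near_nz.
Unshelve. all: by end_near.
Qed.

Theorem lemma2p3 (R : realType) (n : nat) (F : 'rV[R]_n -> R)
  (U : set 'rV[R]_n) (u : 'rV[R]_n -> R) (x : 'rV[R]_n) :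
  is_norm F -> strongly_convex F -> Ck 3 (~` [set 0]) F ->
  open U -> Ck 2 U u -> U x -> grad u x != 0 ->
  let xi := grad u x in
  let a := fun i j : 'I_n => pd i (pd j (fun z => F z ^+ 2 / 2)) xi in
  let Fd := fun i : 'I_n => pd i F xi in
  let uu := fun i j : 'I_n => pd i (pd j u) x in
  \sum_i \sum_j \sum_k \sum_l a i j * a k l * uu i k * uu j l
    >= \sum_i \sum_j \sum_k \sum_l a i j * Fd k * Fd l * uu i k * uu j l.
Proof.
move=> [F0 [Fconv [Feven [Fhom [FC1 Fpos]]]]] hSC [dF0 hC3] oU hu Ux gn0.
cbv zeta; set xi := grad u x.
have dF y : y != 0 -> differentiable F y by move=> yn0; apply: dF0 => /eqP; rewrite (negbTE yn0).
have dpF j y : y != 0 -> differentiable (pd j F) y.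
  by move=> yn0; have [dd _] := hC3 j; apply: dd => /eqP; rewrite (negbTE yn0).
have xin0 : xi != 0 by exact: gn0.
have Fx0 : 0 < F xi := Fpos xi xin0.
have G1 j y : y != 0 -> pd j (fun z => F z ^+ 2 / 2) y = F y * pd j F y.
  move=> yn0.
  have -> : (fun z => F z ^+ 2 / 2) = (2^-1) \*o (F ^+ 2).
    by apply/funext => z /=; rewrite mulrC.
  rewrite /pd deriveMl; last exact/derivableX/diff_derivable/dF.
  rewrite deriveX; last exact/diff_derivable/dF.
  by rewrite /= expr1 /GRing.scale /=; field.
have G2 j y : y != 0 -> pd j (fun z => F z ^+ 2) y = 2 * (F y * pd j F y).
  move=> yn0.
  have -> : (fun z => F z ^+ 2) = F ^+ 2 by apply/funext => z; rewrite exprfctE.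
  rewrite /pd deriveX; last exact/diff_derivable/dF.
  rewrite /= expr1 /GRing.scale /=; ring.
have nearG1 j : \forall y \near xi, pd j (fun z => F z ^+ 2 / 2) y = (F * pd j F) y.
  by apply: near_eq_nz => // y yn0; apply: G1.
have nearG2 j : \forall y \near xi, pd j (fun z => F z ^+ 2) y = (2 \*o (F * pd j F)) y.
  by apply: near_eq_nz => // y yn0; apply: G2.
have dh j : differentiable (F * pd j F) xi by apply: differentiableM; [exact: dF | exact: dpF].
have aE i j : pd i (pd j (fun z => F z ^+ 2 / 2)) xi = pd i (F * pd j F) xi.
  exact: (near_eq_derive _ (nearG1 j)).
have aE2 i j : pd i (pd j (fun z => F z ^+ 2)) xi = 2 * pd i (F * pd j F) xi.
  transitivity (pd i (2 \*o (F * pd j F)) xi); first exact: (near_eq_derive _ (nearG2 j)).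
  by rewrite {1}/pd deriveMl //; exact: diff_derivable.
have aM i j : pd i (F * pd j F) xi = pd i F xi * pd j F xi + F xi * pd i (pd j F) xi.
  rewrite {1}/pd deriveM; last 2 first.
  - exact/diff_derivable/dF.
  - exact/diff_derivable/dpF.
  change ('D_(ebasis R i) (pd j F) xi) with (pd i (pd j F) xi).
  change ('D_(ebasis R i) F xi) with (pd i F xi).
  rewrite /GRing.scale /=; ring.
have Hd y : `|y| < `|xi| -> differentiable F (xi + y).
  move=> hy; apply: dF; apply/eqP => h0.
  have : y = - xi by apply/eqP; rewrite -addr_eq0 addrC h0.
  by move=> yE; move: hy; rewrite yE normrN ltxx.
have sym2 i j : pd i (pd j F) xi = pd j (pd i F) xi.
  apply: esym; apply: (@clairaut R n F xi i j `|xi|) => //.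
  - by rewrite normr_gt0.
  - exact: dpF.
  - exact: dpF.
pose A := fun i j : 'I_n => pd i (pd j (fun z => F z ^+ 2 / 2)) xi.
have symA : symm A.
  by move=> i j; rewrite /A !aE !aM sym2; ring.
have psdA : psd A.
  move=> v; pose w := \row_i v i.
  case: (eqVneq w 0) => [w0 | wn0].
    rewrite /qf big1 // => i _; rewrite big1 // => j _.
    have -> : v i = 0 by have := congr1 (fun M : 'rV[R]_n => M 0 i) w0; rewrite !mxE.
    by rewrite !mul0r.
  have := hSC xi xin0 w wn0.
  rewrite mxE.
  under eq_bigr => j _ do rewrite !mxE big_distrl /=.
  rewrite exchange_big /=.
  have -> : \sum_i \sum_j w 0 i * hess (fun z => F z ^+ 2) xi i j * v j = 2 * qf A v.
    rewrite /qf mulr_sumr; apply: eq_bigr => i _; rewrite mulr_sumr; apply: eq_bigr => j _.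
    rewrite /w !mxE aE2 /A aE; ring.
  move=> h; rewrite -(@pmulr_rge0 _ 2) //; exact: ltW.
have txi t : 0 < t -> t *: xi != 0 by move=> t0; rewrite scaler_eq0 negb_or xin0 gt_eqF.
have col j : \sum_i xi 0 i / F xi * A i j = pd j F xi.
  have hom t : 0 < t -> (F * pd j F) (t *: xi) = t * (F * pd j F) xi.
    move=> t0; change (F (t *: xi) * pd j F (t *: xi) = t * (F xi * pd j F xi)).
    rewrite Fhom //.
    rewrite /pd (@pd_homog0 R n F xi (ebasis R j) t Fhom t0 (dF _ (txi t t0))).
      by rewrite mulrA.
    exact/diff_derivable/dF.
  have E := @euler R n (F * pd j F) xi hom (dh j).
  transitivity ((\sum_i xi 0 i * pd i (F * pd j F) xi) / F xi).
    rewrite mulr_suml; apply: eq_bigr => i _; rewrite /A aE; field; exact: lt0r_neq0.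
  rewrite E; change (F xi * pd j F xi / F xi = pd j F xi); field; exact: lt0r_neq0.
have pq : \sum_i pd i F xi * (xi 0 i / F xi) = 1.
  have E := @euler R n F xi (fun t t0 => Fhom t xi t0) (dF _ xin0).
  transitivity ((\sum_i xi 0 i * pd i F xi) / F xi).
    rewrite mulr_suml; apply: eq_bigr => i _; field; exact: lt0r_neq0.
  rewrite E; field; exact: lt0r_neq0.
exact: (alg_main A (fun i => pd i F xi) (fun i => xi 0 i / F xi) (fun i k => pd i (pd k u) x) symA psdA col pq).
Qed.
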